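(* Let $U$ be a countably infinite universe, $\mathcal{C}=(L_1,L_2,\ldots)$ a countably infinite collection of languages over $U$, $\mathcal{A}=\{A_g\}_{g\in[K]}$ a partition of $U$ into finitely many groups, $\alpha\in[0,1]$, and consider the Representative Procedure in the context. For every $i\ge1$ and every $t\ge i$, let $k$ be the position of the entry $L_i$ in $\mathcal{C}'_t=(L'_1,\ldots,L'_t)$ at the end of iteration $t$. Then $T(L_i)$ is a set of maximum size among all sets $T$ satisfying: $T$ is finite, and there exists a subcollection $\mathcal{D}$ of the entries $(L'_1,\ldots,L'_k)$ that includes $L'_k$, such that every $L\in\mathcal{D}$ contains $T$ and $T$ suffers group scarcity with respect to $\mathcal{D}$ and $\mathcal{A}$.
   Context: A language is an infinite subset of $U$; a collection is a sequence of languages (repetitions allowed, entries distinguished by index). For a finite nonempty $T\subseteq U$, $\mathrm{emp}_T$ is the uniform distribution on $T$, and for a distribution $D$ on $U$, $D^{\mathcal{A}}(g)=\Pr_{x\sim D}[x\in A_g]$. Scarce groups: for a collection $\mathcal{D}$ of languages and finite $T$, let $B=\{g\in[K]: A_g\cap((\bigcap_{L\in\mathcal{D}}L)\setminus T)=\emptyset\}$; $T$ suffers group scarcity w.r.t. $\mathcal{D}$ and $\mathcal{A}$ if some $g\in B$ has $\mathrm{emp}_T^{\mathcal{A}}(g)>\alpha$, or $\sum_{g\in B}\mathrm{emp}_T^{\mathcal{A}}(g)>\alpha(K-|B|)$. Representative Procedure. Set $\mathcal{C}'_0=()$. For $i=1,2,\ldots$: append $L_i$ to the end of $\mathcal{C}'_{i-1}$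 to get $\mathcal{C}'_i=(L'_1,\ldots,L'_i)$, set $j=i$. Repeat: (i) let $T$ be a finite (nonempty) set of largest size for which there is a subcollection $\mathcal{D}$ of the entries $(L'_1,\ldots,L'_j)$ including $L'_j$ with $T\subseteq L$ for all $L\in\mathcal{D}$ and $T$ suffering group scarcity w.r.t. $\mathcal{D}$ and $\mathcal{A}$; let $\mathcal{C}_{\mathrm{chk}}$ be such a $\mathcal{D}$ and $m_{\mathrm{chk}}=|T|$ ($0$ if none exists). (ii) If $j\le1$ or $m_{\mathrm{chk}}>m^\star_\alpha(L'_{j-1})$, stop. (iii) Otherwise swap the entries at positions $j-1,j$ in $\mathcal{C}'_i$, set $j\leftarrow j-1$, return to (i). On stopping, set $T(L_i)=T$, $\mathcal{C}(L_i)=\mathcal{C}_{\mathrm{chk}}$, $m^\star_\alpha(L_i)=m_{\mathrm{chk}}$; the ordering $\mathcal{C}'_t$ at the end of iteration $t$ is the one obtained when the loop of iteration $t$ stops. *)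

(* Defs.v *)
From HB Require Import structures.
From mathcomp Require Import all_boot all_order all_algebra.
From mathcomp Require Import finmap.
From mathcomp Require Import boolp reals.
Set Implicit Arguments. Unset Strict Implicit. Unset Printing Implicit Defensive.
Import Order.TTheory GRing.Theory Num.Theory.
Local Open Scope ring_scope.
Local Open Scope fset_scope.

Definition lang (U : Type) := U -> Prop.

Definition infinite_lang (U : eqType) (L : lang U) : Prop :=
  forall s : seq U, exists x, L x /\ x \notin s.

Section Scarcity.
Variables (R : realType) (U : countType) (K : nat) (grp : U -> 'I_K)
  (alpha : R) (L : nat -> lang U).
(* The groups A_g = {x | grp x = g}; entries of the collection are the
   indices i >= 1, L i = L_i. *)

Definition emp (T : {fset U}) (g : 'I_K) : R :=
  (#|` [fset x in T | grp x == g]|)%:R / (#|` T|)%:R.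

Definition capD (D : seq nat) (x : U) : Prop := forall d, d \in D -> L d x.

Definition scarceB (D : seq nat) (T : {fset U}) : {set 'I_K} :=
  [set g : 'I_K | `[< forall x, grp x = g -> capD D x -> x \in T >]].

Definition group_scarce (D : seq nat) (T : {fset U}) : Prop :=
  let B := scarceB D T in
  (exists g, g \in B /\ alpha < emp T g) \/
  (alpha * (K%:R - (#|B|)%:R) < \sum_(g in B) emp T g).

(* T is a candidate for the check on the ordered prefix p = (L'_1,...,L'_j)
   (a list of original indices; L'_j = last 0 p): T finite nonempty and there
   is a subcollection D of the entries of p including L'_j, with T contained in
   every language of D, and T suffering group scarcity w.r.t. D. *)
Definition cand (p : seq nat) (T : {fset U}) : Prop :=
  T != fset0 /\
  exists D : seq nat, {subset D <= p} /\ last 0%N p \in D /\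
    (forall d x, d \in D -> x \in T -> L d x) /\ group_scarce D T.

Definition is_mchk (p : seq nat) (m : nat) : Prop :=
  (forall T, cand p T -> (#|` T| <= m)%N) /\
  ((0 < m)%N -> exists T, cand p T /\ #|` T| = m).

(* A run of the Representative Procedure.
   ord t = C'_t (list of original indices), Tof i = T(L_i), Cof i = C(L_i),
   mof i = m*_alpha(L_i), pos i = final position j of L_i at iteration i.
   During iteration i, with o = ord (i-1), when L_i sits at position j the
   ordered prefix (L'_1..L'_j) is rcons (take (j-1) o) i, and L'_{j-1} is
   nth 0 o (j-2). *)
Definition is_run (ord : nat -> seq nat) (Tof : nat -> {fset U})
  (Cof : nat -> seq nat) (mof : nat -> nat) (pos : nat -> nat) : Prop :=
  ord 0%N = [::] /\
  forall i, (0 < i)%N ->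
    let o := ord i.-1 in
    let jf := pos i in
    (1 <= jf <= i)%N /\
    [/\ 
        (* non-stopping checks at positions j = i, i-1, ..., jf+1 *)
        (forall j, (jf < j <= i)%N -> exists m,
            is_mchk (rcons (take j.-1 o) i) m /\ (m <= mof (nth 0%N o j.-2))%N),
        (* stopping check at position jf *)
        is_mchk (rcons (take jf.-1 o) i) (mof i),
        ((jf <= 1)%N \/ (mof (nth 0%N o jf.-2) < mof i)%N),
        ((0 < mof i)%N ->
           [/\ Tof i != fset0, {subset Cof i <= rcons (take jf.-1 o) i},
               i \in Cof i,
               (forall d x, d \in Cof i -> x \in Tof i -> L d x) &
               group_scarce (Cof i) (Tof i) /\ #|` Tof i| = mof i]) &
        ord i = take jf.-1 o ++ i :: drop jf.-1 o].

End Scarcity.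

(* Main.v *)
Require Import Defs.
From HB Require Import structures.
From mathcomp Require Import all_boot all_order all_algebra.
From mathcomp Require Import finmap.
From mathcomp Require Import boolp reals.
Import Order.TTheory GRing.Theory Num.Theory.
Local Open Scope ring_scope.
Local Open Scope fset_scope.
From mathcomp Require Import zify.
Section H.
Variables (R : realType) (U : countType) (K : nat) (grp : U -> 'I_K)
  (alpha : R) (L : nat -> lang U).

Lemma cand_mono p p' T : {subset p <= p'} -> last 0%N p' = last 0%N p ->
  cand grp alpha L p T -> cand grp alpha L p' T.
Proof.
move=> sub hl [hT [D [hD [hlast [hin hs]]]]]; split=> //; exists D.
split; first by move=> y /hD/sub.
by rewrite hl.
Qed.

Lemma cand_split p p' x T : {subset p' <= rcons p x} -> last 0%N p' = last 0%N p ->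
  cand grp alpha L p' T -> cand grp alpha L p T \/ cand grp alpha L (rcons p x) T.
Proof.
move=> sub hl [hT [D [hD [hlast [hin hs]]]]].
case: (boolP (x \in D)) => hx.
  right; split=> //; exists D; split; first by move=> y /hD/sub.
  by rewrite last_rcons.
left; split=> //; exists D; split.
  move=> y yD; have := sub _ (hD _ yD); rewrite mem_rcons in_cons => /orP[/eqP e|//].
  by subst; rewrite yD in hx.
by rewrite -hl.
Qed.
End H.

Lemma prefix_eq (i : nat) u v : i \notin u ->
  take (index i (u ++ i :: v)).+1 (u ++ i :: v) = rcons u i.
Proof.
move=> hi; rewrite index_cat (negbTE hi) /= eqxx addn0.
by rewrite take_cat ltnNge leqnSn /= subSnn /= take0 cats1.
Qed.

Lemma ins_left (a : nat) u v (i x : nat) : (a <= size u)%N ->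
  take a (u ++ i :: v) ++ x :: drop a (u ++ i :: v) = (take a u ++ x :: drop a u) ++ i :: v.
Proof.
move=> ha; rewrite takel_cat // -{2}(cat_take_drop a u) -catA drop_size_cat ?size_takel //.
by rewrite -catA.
Qed.

Lemma ins_right (b : nat) u v (i x : nat) :
  take (size u + b.+1) (u ++ i :: v) ++ x :: drop (size u + b.+1) (u ++ i :: v)
  = u ++ i :: (take b v ++ x :: drop b v).
Proof.
rewrite take_cat drop_cat ltnNge leq_addr /= addKn /=.
by rewrite -catA.
Qed.

Lemma mem_ins (a : nat) o (x y : nat) : (y \in take a o ++ x :: drop a o) = (y == x) || (y \in o).
Proof. by rewrite mem_cat in_cons orbCA -mem_cat cat_take_drop. Qed.

Section Main.
Variables (R : realType) (U : countType) (L : nat -> lang U) (K : nat) (grp : U -> 'I_K)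
  (alpha : R) (ord : nat -> seq nat) (Tof : nat -> {fset U}) (Cof : nat -> seq nat)
  (mof : nat -> nat) (pos : nat -> nat)
  (Hrun : is_run grp alpha L ord Tof Cof mof pos).

Lemma ord_bound t y : y \in ord t -> (y <= t)%N.
Proof.
have [H0 Hr] := Hrun.
elim: t y => [|t IH] y; first by rewrite H0.
move: (Hr t.+1 isT) => /= [hj [Hchk Hstop Hlt Hpos ->]].
rewrite mem_ins => /orP[/eqP->//|/IH]; lia.
Qed.

Lemma ord_size t : size (ord t) = t.
Proof.
have [H0 Hr] := Hrun.
elim: t => [|t IH]; first by rewrite H0.
move: (Hr t.+1 isT) => /= [hj [Hchk Hstop Hlt Hpos ->]].
by rewrite size_cat /= addnS -size_cat cat_take_drop IH.
Qed.

Definition Q i t := exists u v, ord t = u ++ i :: v /\ i \notin u /\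
  (forall T, cand grp alpha L (rcons u i) T -> (#|` T| <= mof i)%N) /\
  ((0 < mof i)%N -> cand grp alpha L (rcons u i) (Tof i)).

Lemma inv i (hi : (0 < i)%N) n : Q i (i + n).
Proof.
have [H0 Hr] := Hrun.
elim: n => [|n IH].
  rewrite addn0; move: (Hr i hi) => /= [hj [Hchk Hstop Hlt Hpos Hord]].
  exists (take (pos i).-1 (ord i.-1)), (drop (pos i).-1 (ord i.-1)); split; first exact Hord.
  split; first by apply/negP => /mem_take /ord_bound; lia.
  split; first by move=> T /(proj1 Hstop).
  move=> /Hpos [hT hsub hin hL [hs _]]; split=> //; exists (Cof i); split=> //.
  by rewrite last_rcons.
have [u [v [ho [hu [hb hc]]]]] := IH.
rewrite addnS; set t := (i + n)%N.
have hsz := ord_size t.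
move: (Hr t.+1 isT) => /= [hj [Hchk Hstop Hlt Hpos Hord]].
rewrite ho in Hord Hchk hsz.
have hx : t.+1 != i by rewrite /t; lia.
case: (leqP (pos t.+1).-1 (size u)) => ha.
  rewrite ins_left // in Hord.
  exists (take (pos t.+1).-1 u ++ t.+1 :: drop (pos t.+1).-1 u), v; split => //.
  split; first by rewrite mem_ins negb_or eq_sym hx hu.
  split.
    move=> T0 hT.
    have hsub : {subset rcons (take (pos t.+1).-1 u ++ t.+1 :: drop (pos t.+1).-1 u) i <= rcons (rcons u i) t.+1}.
      by move=> y; rewrite !(mem_rcons, in_cons) mem_ins orbCA.
    have hl : last 0%N (rcons (take (pos t.+1).-1 u ++ t.+1 :: drop (pos t.+1).-1 u) i) = last 0%N (rcons u i).
      by rewrite !last_rcons.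
    have [/hb//|hc'] := @cand_split R U K grp alpha L (rcons u i) _ t.+1 T0 hsub hl hT.
      have e : take (size u).+1 (u ++ i :: v) = rcons u i.
        by rewrite take_cat ltnNge leqnSn /= subSnn /= take0 cats1.
      have e2 : nth 0%N (u ++ i :: v) (size u) = i by rewrite nth_cat ltnn subnn.
      have [|m [[hm1 _] hm2]] := Hchk (size u).+2.
        rewrite size_cat /= in hsz; apply/andP; split; lia.
      rewrite /= e e2 in hm1 hm2.
      exact: leq_trans (hm1 _ hc') hm2.
  move=> /hc; apply: cand_mono.
    by move=> y; rewrite !mem_rcons !in_cons mem_ins => /orP[->|->]; rewrite ?orbT.
  by rewrite !last_rcons.
rewrite (_ : (pos t.+1).-1 = (size u + ((pos t.+1).-1 - (size u).+1).+1)%N) in Hord; last by lia.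
rewrite ins_right in Hord.
by exists u, (take ((pos t.+1).-1 - (size u).+1)%N v ++ t.+1 :: drop ((pos t.+1).-1 - (size u).+1)%N v).
Qed.
End Main.


Theorem mainTheorem18 (R : realType) (U : countType)
  (HU : forall s : seq U, exists x : U, x \notin s)
  (L : nat -> lang U) (HL : forall i, (0 < i)%N -> infinite_lang (L i))
  (K : nat) (grp : U -> 'I_K) (Hgrp : forall g : 'I_K, exists x, grp x = g)
  (alpha : R) (Halpha : 0 <= alpha <= 1)
  (ord : nat -> seq nat) (Tof : nat -> {fset U}) (Cof : nat -> seq nat)
  (mof : nat -> nat) (pos : nat -> nat)
  (Hrun : is_run grp alpha L ord Tof Cof mof pos) :
  forall i t, (1 <= i <= t)%N ->
    let k := (index i (ord t)).+1 in
    let p := take k (ord t) in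
    (forall T, cand grp alpha L p T -> (#|` T| <= #|` Tof i|)%N) /\
    ((exists T, cand grp alpha L p T) -> cand grp alpha L p (Tof i)).
Proof.
Proof.
move=> i t /andP[h1 h2].
have [n ->] : exists n, t = (i + n)%N by exists (t - i)%N; lia.
have [u [v [ho [hu [hb hc]]]]] := @inv R U L K grp alpha ord Tof Cof mof pos Hrun i h1 n.
have [_ Hr] := Hrun.
move: (Hr i h1) => /= [_ [_ _ _ Hpos _]].
rewrite /= ho prefix_eq //.
split.
  move=> T hT; have := hb T hT.
  case: (posnP (mof i)) => [->|mp].
    by rewrite leqn0 cardfs_eq0 (negbTE hT.1).
  by have [_ _ _ _ [_ ->]] := Hpos mp.
move=> [T hT]; apply: hc.
have := hb T hT; have := hT.1; rewrite -cardfs_gt0; lia.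
Qed.
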